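(* Let $(\Sigma,E)$ be an algebraic theory with free monad $T$, and let $(X,I)$ be a $(\Sigma^{\mathrm{s}},E^{\mathrm{s}})$-algebra. Then the assignment $\alpha:TX\to X$, $\alpha(\overline{t})=I(t)_{I(\mathsf{a})}$ for $\Sigma$-terms $t$ over $X$, is a well-defined function, i.e. $I(t)_{I(\mathsf{a})}=I(s)_{I(\mathsf{a})}$ whenever $\overline{t}=\overline{s}$ in $TX$.
   Context: $T=T_{\Sigma,E}$: $TX$ is the set of $\Sigma$-terms over $X$ modulo the smallest congruence containing all substitution instances of $E$; $\overline{t}$ denotes the class of $t$. For a $\Sigma^{\mathrm{s}}$-algebra $(X,I)$ and a function $f:X\to X$, $I(t)_f$ is the value of the $\Sigma$-term $t$ over $X$ obtained by sending each element $x$ occurring as a variable to $f(x)$ and interpreting operations via $I$; here $f=I(\mathsf{a})$. The theory $(\Sigma^{\mathrm{s}},E^{\mathrm{s}})$: $\Sigma^{\mathrm{s}}=\Sigma\uplus\{\mathsf{a}:1\}$ and $E^{\mathrm{s}}$ consists of $\mathsf{a}\mathsf{a}v_1=\mathsf{a}v_1$; $\mathsf{a}(\mathsf{op}(v_1,\dots,v_n))=\mathsf{op}(v_1,\dots,v_n)$ and $\mathsf{op}(\mathsf{a}v_1,\dots,\mathsf{a}v_n)=\mathsf{op}(v_1,\dots,v_n)$ for every $(\mathsf{op}:n)\in\Sigma$; and $t(\mathsf{a}v_1,\dots,\mathsf{a}v_n)=s(\mathsf{a}v_1,\dots,\mathsf{a}v_n)$ for every equation $t(v_1,\dots,v_n)=s(v_1,\dots,v_n)$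 in $E$. *)

(* Defs.v *)
From mathcomp Require Import all_boot.
Set Implicit Arguments. Unset Strict Implicit. Unset Printing Implicit Defensive.

Record signature := Signature { op :> Type; arity : op -> nat }.

Inductive term (S : signature) (V : Type) : Type :=
| Var : V -> term S V
| Op : forall o : S, ('I_(arity o) -> term S V) -> term S V.
Arguments Var {S V} _.
Arguments Op {S V} o _.

Definition interp (S : signature) (X : Type) :=
  forall o : S, ('I_(arity o) -> X) -> X.

Fixpoint eval (S : signature) (X V : Type) (I : interp S X) (rho : V -> X)
  (t : term S V) : X :=
  match t with
  | Var v => rho v
  | Op o args => I o (fun i => eval I rho (args i))
  end.

Fixpoint subst (S : signature) (V W : Type) (sigma : V -> term S W)
  (t : term S V) : term S W :=
  match t with
  | Var v => sigma v
  | Op o args => Op o (fun i => subst sigma (args i))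
  end.

Definition equation (S : signature) := (term S nat * term S nat)%type.

Definition satisfies (S : signature) (X : Type) (I : interp S X)
  (E : equation S -> Prop) : Prop :=
  forall l r, E (l, r) -> forall rho : nat -> X, eval I rho l = eval I rho r.

(* The smallest congruence on S-terms over X containing all substitution
   instances of E; TX is term S X modulo this relation. *)
Inductive cong (S : signature) (E : equation S -> Prop) (X : Type) :
  term S X -> term S X -> Prop :=
| cong_inst : forall l r (sigma : nat -> term S X),
    E (l, r) -> cong E (subst sigma l) (subst sigma r)
| cong_refl : forall t, cong E t t
| cong_sym : forall t s, cong E t s -> cong E s t
| cong_trans : forall t s u, cong E t s -> cong E s u -> cong E t u
| cong_op : forall (o : S) (args1 args2 : 'I_(arity o) -> term S X),
    (forall i, cong E (args1 i) (args2 i)) -> cong E (Op o args1) (Op o args2).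

(* The extended signature Sigma^s = Sigma + {a : 1}; None is the symbol a. *)
Definition ext_sig (S : signature) : signature :=
  @Signature (option S)
    (fun o => match o with Some o => arity o | None => 1%N end).

Fixpoint embed (S : signature) (V : Type) (t : term S V) : term (ext_sig S) V :=
  match t with
  | Var v => Var v
  | Op o args => @Op (ext_sig S) V (Some o) (fun i => embed (args i))
  end.

Definition aT (S : signature) (V : Type) (u : term (ext_sig S) V)
  : term (ext_sig S) V := @Op (ext_sig S) V None (fun _ => u).

Inductive ext_eqs (S : signature) (E : equation S -> Prop) :
  equation (ext_sig S) -> Prop :=
| es_idem : ext_eqs E (aT (aT (Var 0%N)), aT (Var 0%N))
| es_a_op : forall o : S,
    ext_eqs E (aT (@Op (ext_sig S) nat (Some o) (fun i => Var (nat_of_ord i))),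
               @Op (ext_sig S) nat (Some o) (fun i => Var (nat_of_ord i)))
| es_op_a : forall o : S,
    ext_eqs E (@Op (ext_sig S) nat (Some o) (fun i => aT (Var (nat_of_ord i))),
               @Op (ext_sig S) nat (Some o) (fun i => Var (nat_of_ord i)))
| es_E : forall t s, E (t, s) ->
    ext_eqs E (subst (fun v => aT (Var v)) (embed t),
               subst (fun v => aT (Var v)) (embed s)).

Definition reduct (S : signature) (X : Type) (I : interp (ext_sig S) X)
  : interp S X := fun o args => I (Some o) args.

Definition Ia (S : signature) (X : Type) (I : interp (ext_sig S) X) : X -> X :=
  fun x => I None (fun _ => x).

(* I(t)_f with f = I(a): the value of the Sigma-term t over X. *)
Definition alpha (S : signature) (X : Type) (I : interp (ext_sig S) X)
  (t : term S X) : X := eval (reduct I) (Ia I) t.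

(* Main.v *)
Require Import Defs.
From mathcomp Require Import all_boot.
From Stdlib Require Import FunctionalExtensionality.

Lemma alpha_subst (S : signature) (X : Type) (I : interp (ext_sig S) X)
  (sigma : nat -> term S X) (t : term S nat) :
  alpha I (subst sigma t) = eval (reduct I) (fun v => alpha I (sigma v)) t.
Proof.
elim: t => [v|o args IH] //=.
rewrite /alpha /=; rewrite /reduct; congr (I (Some o) _); apply: functional_extensionality => i.
exact: IH.
Qed.

Lemma eval_embed (S : signature) (X : Type) (I : interp (ext_sig S) X)
  (rho : nat -> X) (t : term S nat) :
  eval I rho (subst (fun v => aT (Var v)) (embed t)) = eval (reduct I) (fun v => Ia I (rho v)) t.
Proof.
elim: t => [v|o args IH] //=.
rewrite /reduct; congr (I (Some o) _); apply: functional_extensionality => i.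
exact: IH.
Qed.

Lemma alpha_fixed (S : signature) (E : equation S -> Prop) (X : Type)
  (I : interp (ext_sig S) X) (HI : satisfies I (ext_eqs E)) (t : term S X) :
  Ia I (alpha I t) = alpha I t.
Proof.
case: t => [x|o args].
  rewrite /alpha /=.
  exact: (HI _ _ (es_idem E) (fun _ => x)).
set y := alpha I (Op o args).
pose f := fun i : 'I_(arity o) => eval (reduct I) (Ia I) (args i).
pose rho := fun n : nat => match @insub nat (fun n => n < arity o) 'I_(arity o) n with
                           | Some i => f i | None => y end.
have H := HI _ _ (es_a_op E o) rho.
have Hr : (fun i : 'I_(arity o) => rho (nat_of_ord i)) = f.
  apply: functional_extensionality => i; rewrite /rho valK //.
rewrite /= Hr in H.
exact: H.
Qed.

Theorem lemma12 (S : signature) (E : equation S -> Prop) (X : Type)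
  (I : interp (ext_sig S) X) (HI : satisfies I (ext_eqs E))
  (t s : term S X) :
  cong E t s -> alpha I t = alpha I s.
Proof.
elim => {t s}.
- move=> l r sigma El.
  rewrite !alpha_subst.
  have H := HI _ _ (es_E El) (fun v => alpha I (sigma v)).
  rewrite !eval_embed in H.
  have Hf : (fun v => Ia I (alpha I (sigma v))) = (fun v => alpha I (sigma v)).
    apply: functional_extensionality => v; exact: alpha_fixed HI _.
  by rewrite Hf in H.
- by [].
- by move=> t s _ ->.
- by move=> t s u _ -> _ ->.
- move=> o a1 a2 _ IH; rewrite /alpha /=; rewrite /reduct; congr (I (Some o) _).
  by apply: functional_extensionality => i; exact: IH.
Qed.
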